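(* Let $\mu$ be a signed Borel measure on $\mathbb{R}^d$, let $A_+,A_-$ be the sets of its Hahn decomposition and $\mu_+,\mu_-$ its positive and negative parts. For $\varepsilon>0$ and $N\in\mathbb{N}$ let $$P^{(N)}_{+,\varepsilon}=\Big\{x\in A_+ : \mu_-(B_r(x))\leq\varepsilon\,\mu_+(B_r(x))\ \text{for all } r<\tfrac1N\Big\}.$$ Let $x\in P^{(N)}_{+,\varepsilon}$ and $r<\frac1N$. Let $\varphi$ be a radial non-negative function supported in the unit ball that decreases as the radius grows, and let $\psi$ be a function with $\varphi\leq\psi\leq\frac{1}{2\varepsilon}\varphi$. Then $$\int\psi\Big(\frac{y-x}{r}\Big)\,d\mu_+(y)\leq 2\int\psi\Big(\frac{y-x}{r}\Big)\,d\mu(y).$$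
   Context: $B_r(x)$ is the open ball of radius $r$ centered at $x$. *)

(* Defs.v *)
From HB Require Import structures.
From mathcomp Require Import all_boot all_order all_algebra.
From mathcomp Require Import all_classical all_reals all_analysis.
Set Implicit Arguments.
Unset Strict Implicit.
Unset Printing Implicit Defensive.
Import Order.TTheory GRing.Theory Num.Theory.
Import numFieldNormedType.Exports.
Local Open Scope ring_scope.
Local Open Scope classical_set_scope.

(* R^d as row vectors, equipped with its Borel sigma-algebra
   (the sigma-algebra generated by the open sets). *)
Definition Rd (R : realType) (d : nat) := g_sigma_algebraType (@open 'rV[R]_d).

Definition enorm (R : realType) (d : nat) (v : 'rV[R]_d) : R :=
  Num.sqrt (\sum_(i < d) v ord0 i ^+ 2).

Definition eball (R : realType) (d : nat) (x : Rd R d) (r : R) : set (Rd R d) :=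
  [set y | enorm (y - x) < r].

Definition Pset (R : realType) (d : nat) (nu : {charge set Rd R d -> \bar R})
  (Ap An : set (Rd R d)) (nuPN : hahn_decomposition nu Ap An)
  (eps : R) (N : nat) : set (Rd R d) :=
  [set x | Ap x /\ forall r : R, r < N%:R^-1 ->
     (jordan_neg nuPN (eball x r) <= eps%:E * jordan_pos nuPN (eball x r))%E].

Definition radial (R : realType) (d : nat) (phi : 'rV[R]_d -> R) :=
  forall y z, enorm y = enorm z -> phi y = phi z.

Definition radially_decreasing (R : realType) (d : nat) (phi : 'rV[R]_d -> R) :=
  forall y z, enorm y <= enorm z -> phi z <= phi y.

Definition supported_in_unit_ball (R : realType) (d : nat) (phi : 'rV[R]_d -> R) :=
  forall y, 1 < enorm y -> phi y = 0.

Definition signed_integral (R : realType) (d : nat) (nu : {charge set Rd R d -> \bar R})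
  (Ap An : set (Rd R d)) (nuPN : hahn_decomposition nu Ap An)
  (f : Rd R d -> \bar R) : \bar R :=
  (\int[jordan_pos nuPN]_y f y - \int[jordan_neg nuPN]_y f y)%E.

(* Main.v *)
Require Import Defs.
From HB Require Import structures.
From mathcomp Require Import all_boot all_order all_algebra.
From mathcomp Require Import all_classical all_reals all_analysis.
Import Order.TTheory GRing.Theory Num.Theory.
Import numFieldNormedType.Exports.
Local Open Scope ring_scope.
Local Open Scope classical_set_scope.
From mathcomp Require Import measurable_realfun.
From mathcomp Require Import lra zify.

Lemma enorm_ge0 {R : realType} {d : nat} (v : 'rV[R]_d) : 0 <= enorm v.
Proof. exact: sqrtr_ge0. Qed.

Lemma enormZ {R : realType} {d : nat} (c : R) (v : 'rV[R]_d) :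
  enorm (c *: v) = `|c| * enorm v.
Proof.
rewrite /enorm; under eq_bigr => i _ do rewrite mxE exprMn.
by rewrite -mulr_sumr sqrtrM ?sqrtr_sqr // sqr_ge0.
Qed.

Lemma enorm_continuous (R : realType) (d : nat) : continuous (@enorm R d).
Proof.
move=> v.
apply: (@continuous_comp _ _ _ (fun v : 'rV[R]_d => \sum_(i < d) v ord0 i ^+ 2) (@Num.sqrt R)); last exact: sqrt_continuous.
have H : forall i : 'I_d, (fun w : 'rV[R]_d => w ord0 i ^+ 2) @ v --> v ord0 i ^+ 2.
  move=> i; have c := @coord_continuous R 1 d ord0 i v; rewrite expr2; exact: (cvgM c c).
exact: (@cvg_big _ _ +%R 0 xpredT add_continuous _ (nbhs v) (index_enum _) (fun i w => w ord0 i ^+ 2) (fun i => v ord0 i ^+ 2) _ (fun i _ => H i)).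
Qed.

Definition ccball (R : realType) (d : nat) (x : Rd R d) (r : R) : set (Rd R d) :=
  [set y | enorm (y - x) <= r].
Arguments ccball {R d}.

Lemma enormB_continuous (R : realType) (d : nat) (x : 'rV[R]_d) :
  continuous (fun y : 'rV[R]_d => enorm (y - x)).
Proof.
move=> y; apply: (@continuous_comp _ _ _ (fun y : 'rV[R]_d => y - x) (@enorm R d)); last exact: enorm_continuous.
exact: (cvgB cvg_id (cvg_cst _)).
Qed.

Lemma eball_measurable (R : realType) (d : nat) (x : Rd R d) (a : R) :
  measurable (eball x a).
Proof.
apply: sub_sigma_algebra.
rewrite /eball.
have -> : [set y : Rd R d | enorm (y - x) < a] = (fun y : 'rV[R]_d => enorm (y - x)) @^-1` [set z | z < a] by [].
apply: open_comp; last exact: open_lt.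
move=> y _; exact: enormB_continuous.
Qed.

Lemma ccball_measurable (R : realType) (d : nat) (x : Rd R d) (a : R) :
  measurable (ccball x a).
Proof.
have -> : ccball x a = ~` (~` ccball x a) by rewrite setCK.
apply: measurableC; apply: sub_sigma_algebra.
have -> : ~` ccball x a = ~` ((fun y : 'rV[R]_d => enorm (y - x)) @^-1` [set z | z <= a]) by [].
apply: closed_openC; apply: closed_comp; last exact: closed_le.
move=> y _; exact: enormB_continuous.
Qed.

Lemma ball_or_cball (R : realType) (d : nat) (x : Rd R d) (S : set (Rd R d)) (b : R) :
  0 <= b ->
  (forall y y', S y -> enorm (y' - x) <= enorm (y - x) -> S y') ->
  (forall y, S y -> enorm (y - x) <= b) ->
  exists2 a, (0 <= a) && (a <= b) & (S = eball x a \/ S = ccball x a).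
Proof.
move=> b0 Sdown Sb.
have [[y0 Sy0]|S0] := pselect (exists y, S y); last first.
  exists 0; first by rewrite lexx b0.
  left; apply/seteqP; split => y /=; rewrite /eball /=.
    by move=> Sy; exfalso; apply: S0; exists y.
  by rewrite ltNge enorm_ge0.
pose I := [set enorm (y - x) | y in S].
have hI : has_sup I.
  split; first by exists (enorm (y0 - x)), y0.
  by exists b => _ [y Sy <-]; exact: Sb.
have ub : forall y, S y -> enorm (y - x) <= sup I.
  by move=> y Sy; apply: sup_upper_bound => //; exists y.
have a0 : 0 <= sup I.
  have h1 := ub _ Sy0; have h2 := enorm_ge0 (y0 - x); exact: le_trans h2 h1.
have ab : sup I <= b by apply: sup_le_ub; [by exists (enorm (y0 - x)), y0| move=> _ [y Sy <-]; exact: Sb].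
exists (sup I); first by rewrite a0 ab.
have [[y1 [Sy1 e1]]|nat] := pselect (exists y, S y /\ enorm (y - x) = sup I).
  right; apply/seteqP; split => y /=; rewrite /ccball /=.
    by move=> Sy; exact: ub.
  by move=> h; apply: (Sdown y1) => //; rewrite e1.
left; apply/seteqP; split => y /=; rewrite /eball /=.
  move=> Sy; rewrite lt_neqAle ub // andbT; apply/eqP => e; apply: nat; by exists y.
move=> h.
have hp : 0 < sup I - enorm (y - x) by rewrite subr_gt0.
have [e Ie he] := sup_adherent hp hI.
case: Ie => y' Sy' ey'; apply: (Sdown y') => //.
rewrite ey'; move: he; rewrite opprB addrCA subrr addr0 => /ltW //.
Qed.


Lemma cball_ineq (R : realType) (d : nat) (nu : {charge set Rd R d -> \bar R})
  (Ap An : set (Rd R d)) (nuPN : hahn_decomposition nu Ap An)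
  (eps : R) (N : nat) (x : Rd R d) (a : R) :
  Pset nuPN eps N x -> 0 <= eps -> 0 <= a -> a < N%:R^-1 ->
  (jordan_neg nuPN (ccball x a) <= eps%:E * jordan_pos nuPN (ccball x a))%E.
Proof.
move=> [_ HP] eps0 a0 aN.
set eta := N%:R^-1 - a.
have eta0 : 0 < eta by rewrite subr_gt0.
pose F n := eball x (a + eta / n.+2%:R).
have Frad n : a + eta / n.+2%:R < N%:R^-1.
  rewrite -ltrBrDl -/eta ltr_pdivrMr ?ltr0n // ltr_pMr // ltr1n //.
have FI : \bigcap_n F n = ccball x a.
  apply/seteqP; split => y /=; rewrite /ccball /F /eball /=.
    move=> Hy; rewrite leNgt; apply/negP => ya.
    set t := enorm (y - x) - a.
    have t0 : 0 < t by rewrite subr_gt0.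
    pose n := Num.truncn (eta / t).
    have hn : eta / t < n.+1%:R by rewrite -truncn_le_nat.
    have h1 : t < eta / n.+2%:R by rewrite /t ltrBlDr [_ + a]addrC; exact: Hy n I.
    have h2 : eta / n.+2%:R <= t.
      rewrite ler_pdivrMr ?ltr0n // mulrC -ler_pdivrMr //.
      apply: (le_trans (ltW hn)); by rewrite ler_nat.
    by have := lt_le_trans h1 h2; rewrite ltxx.
  move=> ya n _; apply: (le_lt_trans ya); rewrite ltrDl divr_gt0 // ltr0n //.
have mF n : measurable (F n) by exact: eball_measurable.
have Fdec : {homo F : n m / (n <= m)%N >-> (m <= n)%O}.
  move=> n m nm; apply/subsetPset => y; rewrite /F /eball /= => h.
  apply: (lt_le_trans h); rewrite lerD2l ler_pM2l // lef_pV2 ?posrE ?ltr0n // ler_nat ltnS //.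
have mI : measurable (\bigcap_n F n) by rewrite FI; exact: ccball_measurable.
have cvgP : (jordan_pos nuPN \o F) n @[n --> \oo] --> jordan_pos nuPN (ccball x a).
  rewrite -FI; apply: nonincreasing_cvg_mu => //; by rewrite ltey_eq fin_num_measure.
have cvgPe := cvgeZl (y := eps%:E) (fin_numE _) cvgP.
rewrite -(cvg_lim _ cvgPe) //.
apply: lime_ge; first by apply/cvg_ex; eexists; exact: cvgPe.
apply: nearW => n /=.
apply: le_trans (HP _ (Frad n)).
apply: le_measure; rewrite ?inE //; first exact: ccball_measurable.
  exact: eball_measurable.
rewrite -FI; exact: (bigcap_inf (i := n) (P := setT) (F := F)).
Qed.


Lemma int_sum_indic (dd : measure_display) (T : measurableType dd) (R : realType)
  (mu : {measure set T -> \bar R}) (I : Type) (S : I -> set T) (s : seq I) (c : R) :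
  0 <= c -> (forall i, measurable (S i)) ->
  (\int[mu]_y (c * \sum_(i <- s) \1_(S i) y)%:E = c%:E * \sum_(i <- s) mu (S i))%E.
Proof.
move=> c0 mS.
under eq_integral => y _ do rewrite EFinM.
have h1 : measurable_fun setT (fun y => ((\sum_(i <- s) \1_(S i) y : R)%:E)).
  apply/measurable_EFinP; apply: measurable_sum => i; exact: measurable_indic.
have h2 : forall y, setT y -> (0 <= ((\sum_(i <- s) \1_(S i) y : R)%:E))%E.
  by move=> y _; rewrite lee_fin sumr_ge0 // => i _; rewrite indicE; case: (_ \in _).
rewrite (ge0_integralZl _ _ h1 h2) ?lee_fin //.
congr (_ * _)%E.
under eq_integral => y _ do rewrite -sumEFin.
rewrite ge0_integral_sum //.
- by apply: eq_bigr => i _; rewrite integral_indic // setIT.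
- by move=> i; apply/measurable_EFinP; exact: measurable_indic.
Qed.


Lemma mh_lemma (R : realType) (d : nat) (psi : 'rV[R]_d -> R) (x : Rd R d) (r : R) :
  measurable_fun [set: Rd R d] (psi : Rd R d -> R) ->
  measurable_fun [set: Rd R d] (fun y : Rd R d => psi (r^-1 *: (y - x))).
Proof.
move=> mpsi.
have maff : measurable_fun [set: Rd R d] (fun y : Rd R d => (r^-1 *: (y - x) : Rd R d)).
  apply: measurability; first by reflexivity.
  move=> _ [B oB <-]; rewrite setTI; apply: sub_sigma_algebra.
  apply: (@open_comp _ _ (fun y : 'rV[R]_d => r^-1 *: (y - x))) => // y _.
  apply: (continuousZ (s := fun _ => r^-1) (f := fun w : 'rV[R]_d => w - x)).
    exact: cst_continuous.
  apply: (continuousB (f := id) (g := fun _ => x)); [exact: cvg_id | exact: cst_continuous].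
exact: (measurableT_comp mpsi maff).
Qed.


Theorem lemma13 (R : realType) (d : nat) (nu : {charge set Rd R d -> \bar R})
  (Ap An : set (Rd R d)) (nuPN : hahn_decomposition nu Ap An)
  (eps : R) (N : nat) (x : Rd R d) (r : R)
  (phi psi : 'rV[R]_d -> R) :
  0 < eps -> (0 < N)%N ->
  Pset nuPN eps N x -> 0 < r -> r < N%:R^-1 ->
  radial phi -> (forall y, 0 <= phi y) -> supported_in_unit_ball phi ->
  radially_decreasing phi ->
  (forall y, phi y <= psi y) -> (forall y, psi y <= (2 * eps)^-1 * phi y) ->
  measurable_fun [set: Rd R d] (psi : Rd R d -> R) ->
  (* the integral of psi((y-x)/r) against nu is well defined *)
  ~ ((\int[jordan_pos nuPN]_y (psi (r^-1 *: (y - x)))%:E = +oo)%E /\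
     (\int[jordan_neg nuPN]_y (psi (r^-1 *: (y - x)))%:E = +oo)%E) ->
  (\int[jordan_pos nuPN]_y (psi (r^-1 *: (y - x)))%:E
    <= 2%:E * signed_integral nuPN (fun y => (psi (r^-1 *: (y - x)))%:E))%E.
Proof.
move=> eps0 N0 HPx r0 rN phirad phi0 phisupp phidec phipsi psiphi mpsi nInf.
have [Apx HP] := HPx.
pose h (y : Rd R d) := psi (r^-1 *: (y - x)).
pose g (y : Rd R d) := phi (r^-1 *: (y - x)).
have mh : measurable_fun [set: Rd R d] (fun y => (h y)%:E).
  by apply/measurable_EFinP; exact: mh_lemma.
have h0 y : 0 <= h y by exact: le_trans (phi0 _) (phipsi _).
have gh y : g y <= h y by exact: phipsi.
have hg y : h y <= (2 * eps)^-1 * g y by exact: psiphi.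
have enorm0 : enorm (0 : 'rV[R]_d) = 0.
  by rewrite -(scale0r (0 : 'rV[R]_d)) enormZ normr0 mul0r.
have gmax y : g y <= phi 0 by apply: phidec; rewrite enorm0 enorm_ge0.
have g0 y : 0 <= g y by exact: phi0.
have gdown y y' : enorm (y' - x) <= enorm (y - x) -> g y <= g y'.
  move=> le; apply: phidec; rewrite !enormZ; apply: ler_wpM2l => //.
have gsupp y : 0 < g y -> enorm (y - x) <= r.
  move=> gp; rewrite leNgt; apply/negP => lt.
  have : 1 < enorm (r^-1 *: (y - x)).
    by rewrite enormZ gtr0_norm ?invr_gt0 // mulrC ltr_pdivlMr // mul1r.
  move=> /phisupp e; by rewrite /g e ltxx in gp.
pose z := fine (jordan_neg nuPN setT).
have key : forall del : R, 0 < del -> exists p q : R,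
   [/\ (\int[jordan_neg nuPN]_y (h y)%:E <= ((2 * eps)^-1 * del * (q + z))%:E)%E,
       ((del * p)%:E <= \int[jordan_pos nuPN]_y (h y)%:E)%E & q <= eps * p].
  move=> del del0.
  pose K := (Num.truncn (phi 0 / del)).+1.
  pose S k := [set y : Rd R d | k.+1%:R * del <= g y].
  have Sball k : exists2 a, (0 <= a) && (a <= r) & (S k = eball x a \/ S k = ccball x a).
    apply: (@ball_or_cball R d x (S k) r (ltW r0)).
    - move=> y y' Sy le; rewrite /S /=; exact: le_trans Sy (gdown _ _ le).
    - move=> y Sy; apply: gsupp; apply: lt_le_trans Sy; by rewrite mulr_gt0 // ltr0n.
  have mS k : measurable (S k).
    by have [a _ [->|->]] := Sball k; [exact: eball_measurable | exact: ccball_measurable].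
  have SP k : (jordan_neg nuPN (S k) <= eps%:E * jordan_pos nuPN (S k))%E.
    have [a /andP[a0 ar] [->|->]] := Sball k.
    + apply: HP; exact: le_lt_trans ar rN.
    + apply: (@cball_ineq R d nu Ap An nuPN eps N x a HPx (ltW eps0) a0); exact: le_lt_trans ar rN.
  pose j y := Num.truncn (g y / del).
  have ind k y : \1_(S k) y = (k < j y)%N%:R :> R.
    rewrite indicE (_ : (y \in S k) = (k.+1%:R * del <= g y)); last first.
      by apply/idP/idP; rewrite inE.
    by rewrite -ler_pdivlMr // ltnNge truncn_le_nat -leNgt.
  have cnt y n : \sum_(0 <= k < n) \1_(S k) y = (minn n (j y))%:R :> R.
    elim: n => [|n IH]; first by rewrite big_geq // min0n.
    rewrite big_nat_recr //= IH ind -natrD; congr (_%:R).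
    by case: (ltnP n (j y)) => hh /=; lia.
  have jK y : (j y < K)%N.
    rewrite ltnS; apply: le_truncn; rewrite ler_pM2r ?invr_gt0 //.
  have lowp y : del * (minn K (j y))%:R <= g y.
    rewrite (minn_idPr (ltnW (jK y))) mulrC -ler_pdivlMr //.
    by rewrite truncn_le divr_ge0 // ltW.
  have upp y : g y <= del * ((minn K (j y))%:R + 1).
    rewrite (minn_idPr (ltnW (jK y))).
    have : g y / del < (j y).+1%:R by rewrite -truncn_le_nat.
    rewrite ltr_pdivrMr // => H.
    by rewrite natr1 mulrC; exact: ltW.
  pose s := index_iota 0 K.
  have ind0 k y : 0 <= \1_(S k) y :> R by rewrite indicE; case: (_ \in _).
  have I1 : (\int[jordan_pos nuPN]_y ((del * \sum_(k <- s) \1_(S k) y)%:E)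
             <= \int[jordan_pos nuPN]_y (h y)%:E)%E.
    apply: ge0_le_integral => //.
    - by move=> y _; rewrite lee_fin mulr_ge0 ?sumr_ge0 // ltW.
    - apply/measurable_EFinP; apply: measurable_funM => //.
      by apply: measurable_sum => k; exact: measurable_indic.
    - by move=> y _; rewrite lee_fin /s cnt; exact: le_trans (lowp y) (gh y).
  rewrite int_sum_indic in I1; last by []; last exact: ltW.
  pose S' (o : option nat) := if o is Some k then S k else setT.
  have mS' o : measurable (S' o) by case: o => [k|] /=.
  have I2 : (\int[jordan_neg nuPN]_y (h y)%:E <=
     \int[jordan_neg nuPN]_y (((2 * eps)^-1 * del) * \sum_(o <- None :: map Some s) \1_(S' o) y)%:E)%E.
    apply: ge0_le_integral => //.
    - by move=> y _; rewrite lee_fin.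
    - apply/measurable_EFinP; apply: measurable_funM => //.
      by apply: measurable_sum => k; exact: measurable_indic.
    - move=> y _; rewrite lee_fin big_cons big_map /= indicT /s cnt.
      apply: (le_trans (hg y)); rewrite -mulrA; apply: ler_wpM2l.
        by rewrite invr_ge0 mulr_ge0 // ltW.
      by rewrite /= addrC; exact: upp.
  rewrite int_sum_indic in I2; last exact: mS'; last by rewrite mulr_ge0 ?invr_ge0 ?mulr_ge0 ?ltW.
  rewrite big_cons big_map /= in I2.
  have finS (mu : {finite_measure set Rd R d -> \bar R}) :
      (\sum_(k <- s) mu (S k) = (\sum_(k <- s) fine (mu (S k)))%:E)%E.
    rewrite -sumEFin; apply: eq_bigr => k _; rewrite fineK //; exact: fin_num_measure.
  exists (\sum_(k <- s) fine (jordan_pos nuPN (S k))), (\sum_(k <- s) fine (jordan_neg nuPN (S k))).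
  split.
  - apply: (le_trans I2).
    rewrite (_ : jordan_neg nuPN setT = z%:E); last by rewrite /z fineK //; exact: fin_num_measure.
    rewrite finS -EFinD -EFinM addrC //.
  - by rewrite EFinM -finS.
  - rewrite mulr_sumr; apply: ler_sum => k _; rewrite -lee_fin EFinM !fineK //; try exact: fin_num_measure.
rewrite /signed_integral.
set X := (\int[jordan_neg nuPN]_y (psi (r^-1 *: (y - x)))%:E)%E.
set Y := (\int[jordan_pos nuPN]_y (psi (r^-1 *: (y - x)))%:E)%E.
have X0 : (0 <= X)%E.
  by apply: integral_ge0 => y _; rewrite lee_fin; exact: (h0 y).
have Y0 : (0 <= Y)%E.
  by apply: integral_ge0 => y _; rewrite lee_fin; exact: (h0 y).
have Xfin : X \is a fin_num.
  have [p [q [hX _ _]]] := key 1 ltr01.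
  by rewrite ge0_fin_numE // (le_lt_trans hX) // ltry.
have z0 : 0 <= z by apply: fine_ge0; exact: measure_ge0.
have [Yfin|Yinf] := boolP (Y \is a fin_num); last first.
  have -> : Y = +oo%E by move: Yinf; rewrite ge0_fin_numE // ltey negbK => /eqP.
  by rewrite -(fineK Xfin) /= addye // mulry gtr0_sg // mul1e.
rewrite -(fineK Yfin) -(fineK Xfin) -EFinB -EFinM lee_fin.
set x0 := fine X; set y0 := fine Y.
suff : 2 * x0 <= y0 by lra.
apply/ler_addgt0Pr => e e0.
pose del := eps * e / (z + 1).
have del0 : 0 < del by rewrite /del divr_gt0 ?mulr_gt0 // ltr_wpDl.
have [p [q [hX hY hq]]] := key del del0.
have {}hX : x0 <= (2 * eps)^-1 * del * (q + z).
  by rewrite -lee_fin /x0 (fineK Xfin); exact: hX.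
have {}hY : del * p <= y0.
  by rewrite -lee_fin /y0 (fineK Yfin); exact: hY.
have A : 2 * eps * x0 <= del * (q + z).
  have := ler_wpM2l (ltW (mulr_gt0 (ltr0Sn R 1) eps0) : 0 <= 2 * eps) hX.
  by rewrite !mulrA mulfV ?mul1r // mulf_neq0 // gt_eqF.
have D : del * z <= eps * e.
  rewrite /del -mulrA [_^-1 * z]mulrC; apply: ler_piMr; first by rewrite ltW ?mulr_gt0.
  by rewrite ler_pdivrMr ?ltr_wpDl // mul1r lerDl.
have B' : del * q <= del * (eps * p) by rewrite ler_wpM2l // ltW.
have C' : eps * (del * p) <= eps * y0 by rewrite ler_wpM2l // ltW.
rewrite -(ler_pM2l eps0).
lra.
Qed.
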